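(* Let $\{(Y_i,\tilde Y_i)\}_{i\in\mathbb Z}$ be i.i.d. with law $P_{Y\tilde Y}$, assume $I(Y;\tilde Y)>0$, and let $E_+>0$ be a constant such that for every $m\in\mathbb N_+$ and any i.i.d. pairs $(U_i,V_i)\sim P_Y\otimes P_Y$ one has $\mathbb P[\sum_{i=1}^m\log\lambda(U_i,V_i)>0]\le\exp[-mE_+]$ (such a constant exists). Then for every integer $k\ge1$ and every $t\in\mathbb N_+$, \[ \mathbb P\!\left[\sum_{i=1}^t\log\lambda(Y_{k+i},\tilde Y_i)>0\right]\le2\exp\!\left[-(t-1)\frac{E_+}{2}\right]. \]
   Context: $\mathcal X,\mathcal Y$ finite alphabets; logs base $|\mathcal X|$ and $\exp$ in the same base. Given $P_X$ and a channel $P_{Y\mid X}$: $P_Y$ is the $Y$-marginal of $P_X\otimes P_{Y\mid X}$ (assume $P_Y(y)>0$ for all $y$), $P_{Y\tilde Y}(y,\tilde y):=\sum_xP_X(x)P_{Y\mid X}(y\mid x)P_{Y\mid X}(\tilde y\mid x)$ (note its $\tilde Y$-marginal is also $P_Y$), $\lambda(y,\tilde y):=P_{Y\tilde Y}(y,\tilde y)/(P_Y(y)P_Y(\tilde y))$, and $I(Y;\tilde Y)$ is the mutual information under $P_{Y\tilde Y}$. *)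

(* Defs.v *)
From HB Require Import structures.
From mathcomp Require Import all_boot all_order all_algebra.
From mathcomp Require Import all_classical all_reals all_analysis.
Set Implicit Arguments. Unset Strict Implicit. Unset Printing Implicit Defensive.
Import Order.TTheory GRing.Theory Num.Theory.
Local Open Scope ring_scope.

Section Defs.
Variables (R : realType) (X Y : finType).
Variables (PX : X -> R) (W : X -> Y -> R).

Definition PY (y : Y) : R := \sum_(x : X) PX x * W x y.

Definition PYY (y yt : Y) : R := \sum_(x : X) PX x * W x y * W x yt.

Definition lam (y yt : Y) : R := PYY y yt / (PY y * PY yt).

(* logarithm and exponential in base b (the paper uses b = |X|) *)
Definition logb (b x : R) : R := ln x / ln b.
Definition expb (b x : R) : R := b `^ x.

(* extended logarithm: log 0 = -oo (needed since lambda may vanish) *)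
Definition elogb (b x : R) : \bar R :=
  if 0 < x then (logb b x)%:E else -oo%E.

Definition MI (b : R) : R :=
  \sum_(y : Y) \sum_(yt : Y)
     (if 0 < PYY y yt then PYY y yt * logb b (lam y yt) else 0).
End Defs.

(* Main.v *)
Require Import Defs.
From HB Require Import structures.
From mathcomp Require Import all_boot all_order all_algebra.
From mathcomp Require Import all_classical all_reals all_analysis.
From mathcomp Require Import lra zify.
Import Order.TTheory GRing.Theory Num.Theory.


Definition cn (k i : nat) : bool := if odd k then odd i else odd (i + i %/ k).

Lemma div_even_succ k j : (0 < k)%N -> ~~ odd k -> (j.*2.+1 %/ k = j.*2 %/ k)%N.
Proof.
move=> k0 ek.
have k2 : (2 <= k)%N.
  by move: ek k0; case: k => [|[|k]].
rewrite -addn1 divnD // (divn_small (m:=1)); last by lia.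
have hm := odd_mod j.*2 (negbTE ek).
rewrite odd_double in hm.
have hl : (j.*2 %% k < k)%N by rewrite ltn_mod.
have h1 : (1 %% k = 1)%N.
  by apply: modn_small; lia.
rewrite h1.
suff -> : (k <= j.*2 %% k + 1)%N = false by rewrite !addn0.
move: hm hl ek; rewrite -[j.*2 %% k]odd_double_half -[k]odd_double_half.
case: (odd (j.*2 %% k)) => //=; case: (odd k) => //= _ _; rewrite !add0n -!muln2; lia.
Qed.

Lemma cn_pair k j : (0 < k)%N -> cn k j.*2.+1 = ~~ cn k j.*2.
Proof.
move=> k0; rewrite /cn; case: ifP => ok.
  by rewrite /= odd_double.
by rewrite div_even_succ ?ok // addSn /=.
Qed.

Lemma cn_shift k i : (0 < k)%N -> cn k (i + k) = ~~ cn k i.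
Proof.
move=> k0; rewrite /cn; case: ifP => ok.
  by rewrite oddD ok addbT.
rewrite divnDr ?dvdnn // divnn k0.
rewrite !oddD ok /=. by case: (odd i); case: (odd (i %/ k)).
Qed.

Lemma count_pairs (c : nat -> bool) (hc : forall j, c j.*2.+1 = ~~ c j.*2) n :
  count c (iota 0 n.*2) = n.
Proof.
elim: n => // n IH.
rewrite doubleS -addn2 iotaD count_cat IH add0n /=.
rewrite hc; case: (c n.*2) => /=; lia.
Qed.

Lemma count_half (c : nat -> bool) (hc : forall j, c j.*2.+1 = ~~ c j.*2) t :
  (t./2 <= count c (iota 0 t))%N.
Proof.
have ht : t = ((t./2).*2 + odd t)%N by rewrite addnC odd_double_half.
rewrite {2}ht iotaD count_cat count_pairs //; exact: leq_addr.
Qed.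

Lemma card_set_count t (c : nat -> bool) :
  #|[set i : 'I_t | c i]| = count c (iota 0 t).
Proof.
by rewrite cardsE cardE /enum_mem size_filter -enumT /= -val_enum_ord count_map.
Qed.

Local Open Scope ring_scope.
Set Implicit Arguments. Unset Strict Implicit. Unset Printing Implicit Defensive.

Section Marg.
Variables (R : realType) (X Y : finType) (PX : X -> R) (W : X -> Y -> R).
Hypothesis PX_sum1 : \sum_(x : X) PX x = 1.
Hypothesis W_sum1 : forall x, \sum_(y : Y) W x y = 1.

Lemma PYY_sum2 y : \sum_yt PYY PX W y yt = PY PX W y.
Proof.
rewrite /PYY /PY exchange_big; apply: eq_bigr => x _.
by rewrite -mulr_sumr W_sum1 mulr1.
Qed.

Lemma PYY_sum1 yt : \sum_y PYY PX W y yt = PY PX W yt.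
Proof.
rewrite /PYY /PY exchange_big; apply: eq_bigr => x _.
under eq_bigr do rewrite mulrAC.
by rewrite -mulr_sumr W_sum1 mulr1.
Qed.

Lemma PYY_sum : \sum_y \sum_yt PYY PX W y yt = 1.
Proof.
under eq_bigr do rewrite PYY_sum2.
rewrite /PY exchange_big -[RHS]PX_sum1; apply: eq_bigr => x _.
by rewrite -mulr_sumr W_sum1 mulr1.
Qed.

Lemma prod_pred_exch (J : finType) m (al : 'I_m -> J) (g : J -> 'I_m -> R) :
  \prod_(j : J) \prod_(l | al l == j) g j l = \prod_l g (al l) l.
Proof.
under eq_bigr do rewrite big_mkcond /=.
rewrite exchange_big /=; apply: eq_bigr => l _.
rewrite -big_mkcond /=.
rewrite (eq_bigl (fun j => j == al l)); first by rewrite big_pred1_eq.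
by move=> j; rewrite eq_sym.
Qed.

Lemma sum_ind1 (G : Y -> R) u : \sum_y (y == u)%:R * G y = G u.
Proof.
rewrite (bigD1 u) //= eqxx mul1r big1 ?addr0 // => y /negbTE ->.
by rewrite mul0r.
Qed.

Lemma sum_pair (F : Y * Y -> R) : \sum_p F p = \sum_y \sum_yt F (y, yt).
Proof. by rewrite pair_big /=; apply: eq_big => // -[]. Qed.

Lemma marg (J : finType) m (al be : 'I_m -> J) (inj_al : injective al)
  (inj_be : injective be) (disj : forall l l', al l != be l')
  (uv : {ffun 'I_m -> Y * Y}) :
  \sum_(f : {ffun J -> Y * Y} | [ffun l => ((f (al l)).1, (f (be l)).2)] == uv)
      \prod_j PYY PX W (f j).1 (f j).2
  = \prod_l (PY PX W (uv l).1 * PY PX W (uv l).2).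
Proof.
pose h (j : J) (p : Y * Y) : R := PYY PX W p.1 p.2 *
   ((\prod_(l | al l == j) (p.1 == (uv l).1)%:R) *
    (\prod_(l | be l == j) (p.2 == (uv l).2)%:R)).
have H1 : forall f : {ffun J -> Y * Y},
   (([ffun l => ((f (al l)).1, (f (be l)).2)] == uv)%:R *
      \prod_j PYY PX W (f j).1 (f j).2) = \prod_j h j (f j).
  move=> f; rewrite /h big_split /= big_split /=.
  rewrite (prod_pred_exch al (fun j l => ((f j).1 == (uv l).1)%:R)).
  rewrite (prod_pred_exch be (fun j l => ((f j).2 == (uv l).2)%:R)).
  rewrite mulrC; congr (_ * _).
  case: eqP => [<-|neq].
    by rewrite -big_split big1 // => l _; rewrite !ffunE /= !eqxx mulr1.
  have [l hl] : exists l, [ffun l => ((f (al l)).1, (f (be l)).2)] l != uv l.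
    apply/existsP; apply: contra_notT neq => /existsPn H.
    by apply/ffunP => l; apply/eqP; move: (H l); rewrite negbK.
  rewrite -big_split (bigD1 l) //=.
  move: hl; rewrite ffunE; case: (uv l) => u v /=.
  by rewrite xpair_eqE negb_and => /orP [] /negbTE ->; rewrite ?mul0r ?mulr0 ?mul0r.
rewrite big_mkcond /=.
rewrite (eq_bigr (fun f : {ffun J -> Y * Y} => \prod_j h j (f j))); last first.
  by move=> f _; rewrite -H1; case: eqP; rewrite ?mul1r ?mul0r.
rewrite -bigA_distr_bigA /=.
rewrite (eq_bigr (fun j => (\prod_(l | al l == j) PY PX W (uv l).1) *
                          (\prod_(l | be l == j) PY PX W (uv l).2))); last first.
  move=> j _; rewrite /h.
  case: (pickP (fun l => al l == j)) => [l /eqP hl | hn].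
    have hA : forall G : 'I_m -> R, \prod_(l' | al l' == j) G l' = G l.
      move=> G; rewrite (eq_bigl (pred1 l)) ?big_pred1_eq //.
      by move=> l'; rewrite /= -hl (inj_eq inj_al).
    have hB : forall G : 'I_m -> R, \prod_(l' | be l' == j) G l' = 1.
      by move=> G; rewrite big_pred0 // => l'; rewrite -hl eq_sym (negbTE (disj _ _)).
    under eq_bigr do rewrite hA hB mulr1.
    rewrite hA hB mulr1 sum_pair.
    under eq_bigr do under eq_bigr do rewrite mulrC /=.
    rewrite -[RHS]PYY_sum2 -(sum_ind1 (fun y => \sum_yt PYY PX W y yt)); apply: eq_bigr => y _.
    by rewrite mulr_sumr.
  have hA : forall G : 'I_m -> R, \prod_(l' | al l' == j) G l' = 1.
    by move=> G; rewrite big_pred0.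
  under eq_bigr do rewrite hA mul1r.
  rewrite hA mul1r.
  case: (pickP (fun l => be l == j)) => [l /eqP hl | hn'].
    have hB : forall G : 'I_m -> R, \prod_(l' | be l' == j) G l' = G l.
      move=> G; rewrite (eq_bigl (pred1 l)) ?big_pred1_eq //.
      by move=> l'; rewrite /= -hl (inj_eq inj_be).
    under eq_bigr do rewrite hB.
    rewrite hB sum_pair exchange_big /=.
    rewrite -[RHS]PYY_sum1 -(sum_ind1 (fun yt => \sum_y PYY PX W y yt)); apply: eq_bigr => yt _.
    rewrite mulr_sumr; apply: eq_bigr => y _.
    by rewrite mulrC.
  have hB : forall G : 'I_m -> R, \prod_(l' | be l' == j) G l' = 1.
    by move=> G; rewrite big_pred0.
  under eq_bigr do rewrite hB mulr1.
  by rewrite hB sum_pair PYY_sum.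
rewrite big_split /= (prod_pred_exch al (fun j l => PY PX W (uv l).1)).
rewrite (prod_pred_exch be (fun j l => PY PX W (uv l).2)).
by rewrite -big_split.
Qed.
End Marg.

Section Half.
Variables (R : realType) (X Y : finType) (PX : X -> R) (W : X -> Y -> R).
Hypothesis PX_sum1 : \sum_(x : X) PX x = 1.
Hypothesis W_sum1 : forall x, \sum_(y : Y) W x y = 1.
Variable Eplus : R.
Hypothesis HE : forall m : nat, (0 < m)%N ->
     \sum_(uv : {ffun 'I_m -> Y * Y} |
             (0 < \sum_(i < m) elogb (#|X|%:R) (lam PX W (uv i).1 (uv i).2))%E)
        \prod_(i < m) (PY PX W (uv i).1 * PY PX W (uv i).2)
     <= expb (#|X|%:R) (- (m%:R * Eplus)).

Lemma half_bound k t (S : {set 'I_t})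
  (hS : forall i i' : 'I_t, i \in S -> i' \in S -> (i' : nat) != (i + k)%N) :
  \sum_(f : {ffun 'I_(k + t) -> Y * Y} |
          (0 < \sum_(i in S) elogb (#|X|%:R)
                 (lam PX W (f (rshift k i)).1 (f (widen_ord (leq_addl k t) i)).2))%E)
     \prod_(j < k + t) PYY PX W (f j).1 (f j).2
  <= expb (#|X|%:R) (- (#|S|%:R * Eplus)).
Proof.
set m := #|S|.
pose al (l : 'I_m) : 'I_(k + t) := rshift k (enum_val l).
pose be (l : 'I_m) : 'I_(k + t) := widen_ord (leq_addl k t) (enum_val l).
have inj_al : injective al by move=> l l' /rshift_inj /enum_val_inj.
have inj_be : injective be by move=> l l' /(congr1 val) /= /val_inj /enum_val_inj.
have disj : forall l l', al l != be l'.
  move=> l l'; apply/negP => /eqP /(congr1 val) /= h.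
  move: (hS _ _ (enum_valP l) (enum_valP l')); rewrite -h addnC eqxx //.
pose F (f : {ffun 'I_(k + t) -> Y * Y}) : {ffun 'I_m -> Y * Y} :=
  [ffun l => ((f (al l)).1, (f (be l)).2)].
pose E (uv : {ffun 'I_m -> Y * Y}) :=
  (0 < \sum_(i < m) elogb (#|X|%:R) (lam PX W (uv i).1 (uv i).2))%E.
rewrite (eq_bigl (fun f => E (F f))); last first.
  move=> f; rewrite /E big_enum_val.
  by under [in RHS]eq_bigr do rewrite ffunE /=.
rewrite (partition_big F E) //=.
rewrite (eq_bigr (fun uv : {ffun 'I_m -> Y * Y} => \prod_(l < m) (PY PX W (uv l).1 * PY PX W (uv l).2))); last first.
  move=> uv Euv; rewrite -(marg PX_sum1 W_sum1 inj_al inj_be disj).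
  apply: eq_bigl => f; rewrite /F.
  case: eqP => [->|]; by rewrite ?andbT ?andbF.
case: (posnP m) => [m0 | mpos]; last exact: HE.
rewrite big_pred0 ?powR_ge0 // => uv; rewrite /E.
move: uv; rewrite m0 => uv.
by rewrite big_ord0 ltxx.
Qed.
End Half.

Unset Implicit Arguments.

Theorem mainTheorem12 (R : realType) (X Y : finType)
  (PX : X -> R) (W : X -> Y -> R)
  (PX_ge0 : forall x, 0 <= PX x) (PX_sum1 : \sum_(x : X) PX x = 1)
  (W_ge0 : forall x y, 0 <= W x y) (W_sum1 : forall x, \sum_(y : Y) W x y = 1)
  (PY_gt0 : forall y, 0 < PY PX W y)
  (I_gt0 : 0 < MI PX W (#|X|%:R))
  (Eplus : R) (Eplus_gt0 : 0 < Eplus)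
  (HE : forall m : nat, (0 < m)%N ->
     \sum_(uv : {ffun 'I_m -> Y * Y} |
             (0 < \sum_(i < m) elogb (#|X|%:R) (lam PX W (uv i).1 (uv i).2))%E)
        \prod_(i < m) (PY PX W (uv i).1 * PY PX W (uv i).2)
     <= expb (#|X|%:R) (- (m%:R * Eplus)))
  (k t : nat) (hk : (1 <= k)%N) (ht : (0 < t)%N) :
  \sum_(f : {ffun 'I_(k + t) -> Y * Y} |
          (0 < \sum_(i < t) elogb (#|X|%:R)
                 (lam PX W (f (rshift k i)).1 (f (widen_ord (leq_addl k t) i)).2))%E)
     \prod_(j < k + t) PYY PX W (f j).1 (f j).2
  <= 2 * expb (#|X|%:R) (- ((t%:R - 1) * (Eplus / 2))).
Proof.
have Xne : (0 < #|X|)%N.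
  case: (boolP (0 < #|X|)%N) => //; rewrite -eqn0Ngt => /eqP/card0_eq h.
  move: PX_sum1; rewrite big_pred0 => [/eqP|x]; first by rewrite eq_sym oner_eq0.
  exact: h x.
have b1 : 1 <= (#|X|%:R : R) by rewrite ler1n.
set b := (#|X|%:R : R) in b1 HE *.
pose A := [set i : 'I_t | cn k i].
pose B := [set i : 'I_t | ~~ cn k i].
have hA : forall i i' : 'I_t, i \in A -> i' \in A -> (i' : nat) != (i + k)%N.
  move=> i i'; rewrite !inE => hi hi'; apply/eqP => e.
  by move: hi'; rewrite e cn_shift // hi.
have hB : forall i i' : 'I_t, i \in B -> i' \in B -> (i' : nat) != (i + k)%N.
  move=> i i'; rewrite !inE => hi hi'; apply/eqP => e.
  by move: hi'; rewrite e cn_shift // negbK (negbTE hi).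
have cA : (t./2 <= #|A|)%N.
  by rewrite card_set_count; apply: count_half => j; rewrite cn_pair.
have cB : (t./2 <= #|B|)%N.
  rewrite (card_set_count t (fun i => ~~ cn k i)); apply: count_half => j.
  by rewrite cn_pair.
pose G (f : {ffun 'I_(k + t) -> Y * Y}) (i : 'I_t) :=
  elogb b (lam PX W (f (rshift k i)).1 (f (widen_ord (leq_addl k t) i)).2).
pose mu (f : {ffun 'I_(k + t) -> Y * Y}) := \prod_(j < k + t) PYY PX W (f j).1 (f j).2.
have mu_ge0 : forall f, 0 <= mu f.
  move=> f; apply: prodr_ge0 => j _; apply: sumr_ge0 => x _.
  by rewrite !mulr_ge0.
have split : forall f, (0 < \sum_(i < t) G f i)%E ->
   ((0 < \sum_(i in A) G f i)%E || (0 < \sum_(i in B) G f i)%E).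
  move=> f; rewrite (bigID (fun i : 'I_t => cn k i)) /=.
  rewrite (eq_bigl (fun i => i \in A)); last by move=> i; rewrite !inE.
  rewrite (eq_bigl (fun i => i \in B) (P1 := fun i : 'I_t => ~~ cn k i)); last by move=> i; rewrite !inE.
  apply: contraTT; rewrite negb_or -!leNgt => /andP [h1 h2].
  exact: adde_le0.
have HA := half_bound PX_sum1 W_sum1 HE hA.
have HB := half_bound PX_sum1 W_sum1 HE hB.
apply: le_trans (_ : _ <= expb b (- (#|A|%:R * Eplus)) + expb b (- (#|B|%:R * Eplus))) _.
  apply: le_trans (lerD HA HB).
  rewrite [X in _ <= X + _]big_mkcond [X in _ <= _ + X]big_mkcond -big_split big_mkcond /=.
  apply: ler_sum => f _.
  have := split f; rewrite /G => sp; have h0 := mu_ge0 f; rewrite /mu in h0.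
  case: ifP => hP; last by case: ifP => _; case: ifP => _; lra.
  by case/orP: (sp hP) => ->; case: ifP => _; lra.
have hr : forall n : nat, (t./2 <= n)%N ->
    expb b (- (n%:R * Eplus)) <= expb b (- ((t%:R - 1) * (Eplus / 2))).
  move=> n hn; apply: ler_powR => //.
  have : (t <= n.*2.+1)%N.
    have ht2 := odd_double_half t.
    move: ht2 hn; case: (odd t) => /=; rewrite -!muln2; lia.
  rewrite -(ler_nat R) -addn1 natrD -muln2 natrM => h.
  nra.
have := hr _ cA; have := hr _ cB; lra.
Qed.
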